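(* Let $p\in(1,2]$ and let $Y_1,Y_2,\dots$ be i.i.d. real random variables with $\nu_p:=\mathbb{E}|Y_k|^p<\infty$ and mean $y:=\mathbb{E}[Y_k]$. For a constant $c>0$ and $n\ge1$ define $$\hat Y_n:=\frac{c}{n^{1-1/p}}\sum_{k=1}^n\psi_p\!\left(\frac{Y_k}{c\,n^{1/p}}\right).$$ Then for all $\epsilon>0$, $$\mathbb{P}\left(\hat Y_n>y+\epsilon\right)\le\exp\left(-\frac{n^{(p-1)/p}\epsilon}{c}+\frac{b_p\nu_p}{c^p}\right),\qquad \mathbb{P}\left(y>\hat Y_n+\epsilon\right)\le\exp\left(-\frac{n^{(p-1)/p}\epsilon}{c}+\frac{b_p\nu_p}{c^p}\right).$$
   Context: $b_p:=\left[2\left(\frac{2-p}{p-1}\right)^{1-\frac{2}{p}}+\left(\frac{2-p}{p-1}\right)^{2-\frac{2}{p}}\right]^{-p/2}$ (with $0^0=1$ when $p=2$). The influence function is $\psi_p(x):=\ln\left(b_p|x|^p+x+1\right)$ for $x\ge0$ and $\psi_p(x):=-\ln\left(b_p|x|^p-x+1\right)$ for $x<0$. *)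

(* Defs.v *)
From HB Require Import structures.
From mathcomp Require Import all_boot all_order all_algebra.
From mathcomp Require Import all_classical all_reals all_analysis.
Set Implicit Arguments. Unset Strict Implicit. Unset Printing Implicit Defensive.
Import Order.TTheory GRing.Theory Num.Theory.
Import numFieldNormedType.Exports.
Local Open Scope classical_set_scope.
Local Open Scope ring_scope.

(* b_p, with powR satisfying 0 `^ 0 = 1 (so the convention 0^0 = 1 holds). *)
Definition b_const {R : realType} (p : R) : R :=
  let q := (2 - p) / (p - 1) in
  (2 * q `^ (1 - 2 / p) + q `^ (2 - 2 / p)) `^ (- (p / 2)).

Definition psi {R : realType} (p : R) (x : R) : R :=
  if 0 <= x then ln (b_const p * `|x| `^ p + x + 1)
  else - ln (b_const p * `|x| `^ p - x + 1).

Definition mutually_independent {R : realType} {d : measure_display}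
  {T : measurableType d} (P : probability T R) (Y : nat -> {RV P >-> R}) : Prop :=
  forall (J : seq nat) (B : nat -> set R), uniq J ->
    (forall j, measurable (B j)) ->
    P (\bigcap_(j in [set j | j \in J]) (Y j @^-1` B j)) =
    (\prod_(j <- J) P (Y j @^-1` B j))%E.

Definition identically_distributed {R : realType} {d : measure_display}
  {T : measurableType d} (P : probability T R) (Y : nat -> {RV P >-> R}) : Prop :=
  forall (k : nat) (B : set R), measurable B ->
    P (Y k @^-1` B) = P (Y 0%N @^-1` B).

(* the estimator hat Y_n, using Y_0, ..., Y_{n-1} (= the paper's Y_1..Y_n) *)
Definition Yhat {R : realType} {d : measure_display} {T : measurableType d}
  (P : probability T R) (Y : nat -> {RV P >-> R}) (p c : R) (n : nat) (w : T) : R :=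
  c / (n%:R `^ (1 - p^-1)) *
  \sum_(k < n) psi p (Y k w / (c * n%:R `^ (p^-1))).

(* Main.v *)
Require Import Defs.
From HB Require Import structures.
From mathcomp Require Import all_boot all_order all_algebra.
From mathcomp Require Import all_classical all_reals all_analysis.
From mathcomp Require Import measurable_realfun measurable_fun_approximation.
From mathcomp Require Import ring lra.
Import Order.TTheory GRing.Theory Num.Theory.
Import numFieldNormedType.Exports.
Local Open Scope classical_set_scope.
Local Open Scope ring_scope.

Section RealPart.
Variable R : realType.
Implicit Types (p t x : R).

Lemma amgm (d : R) {w : R} : 0 <= w -> w <= 1 ->
  1 <= w * expR ((w-1) * d) + (1-w) * expR (w * d).
Proof.
move=> w0 w1.
have := convex_expR (Itv01 w0 w1) ((w-1)*d) (w*d).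
rewrite !convRE /=.
have -> : w * ((w - 1) * d) + (1 - w) * (w * d) = 0 by ring.
by rewrite expR0.
Qed.

Lemma powR_pos (r : R) {a : R} : 0 < a -> a `^ r = expR (r * ln a).
Proof. by move=> a0; rewrite /powR gt_eqF. Qed.

Lemma keyK_lt2 p t : 1 < p -> p < 2 -> 0 < t ->
  t ^+ 2 <= 2 * (b_const p * t `^ p) + (b_const p * t `^ p) ^+ 2.
Proof.
move=> p1 p2 t0.
have p0 : 0 < p by lra.
rewrite /b_const.
set q := (2 - p) / (p - 1).
have q0 : 0 < q by rewrite /q divr_gt0; lra.
set w := 2 - 2 / p.
have w0 : 0 < w.
  rewrite /w subr_gt0 ltr_pdivrMr //; lra.
have w1 : w <= 1.
  rewrite /w lerBlDr -lerBlDl ler_pdivlMr //; lra.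
have hqw : q * w = 2 * (1 - w).
  rewrite /q /w; field; apply/andP; split; apply/negP=> /eqP; lra.
have ew : 1 - 2 / p = w - 1 by rewrite /w; ring.
rewrite ew.
set lq := ln q.
rewrite (powR_pos (w - 1) q0) (powR_pos w q0).
set Q := expR ((w - 1) * lq).
have eqq : expR (w * lq) = Q * q.
  by rewrite /Q -[in RHS](lnK q0) -expRD /lq; congr expR; ring.
rewrite -/w eqq.
set G := 2 * Q + Q * q.
have Q0 : 0 < Q by apply: expR_gt0.
have G0 : 0 < G by rewrite /G; apply: addr_gt0; apply: mulr_gt0 => //.
rewrite (powR_pos _ G0) (powR_pos p t0).
set x := ln t. set lG := ln G.
set rho := - (p / 2) * lG + p * x.
have erho : expR (- (p / 2) * lG) * expR (p * x) = expR rho by rewrite -expRD.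
rewrite erho.
set E := expR (2 / p * rho).
set A := expR ((w - 1) * (rho - lq)).
set B := expR (w * (rho - lq)).
have h1 : expR rho = E * A * Q.
  rewrite /E /A /Q -!expRD; congr expR; rewrite /w; field; apply/negP=> /eqP; lra.
have h2 : expR rho ^+ 2 = E * B * (Q * q).
  rewrite -eqq /E /B -!expRD -expRM_natl; congr expR.
  by rewrite /w mulr_natl; field; apply/negP=> /eqP; lra.
have h3 : t ^+ 2 = E * G.
  rewrite -[t](lnK t0) -/x -expRM_natl /E -[G](lnK G0) -/lG -expRD.
  congr expR; rewrite /rho mulr_natl; field; apply/negP=> /eqP; lra.
rewrite h2 h1 h3.
have am := amgm (rho - lq) (ltW w0) w1.
rewrite -/A -/B in am.
have A0 : 0 < A by apply: expR_gt0.
have B0 : 0 < B by apply: expR_gt0.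
have key : 2 + q <= 2 * A + q * B.
  rewrite -(ler_pM2l w0).
  have -> : w * (2 + q) = 2 * w + q * w by ring.
  have -> : w * (2 * A + q * B) = 2 * w * A + (q * w) * B by ring.
  rewrite hqw.
  lra.
have EQ0 : 0 < E * Q by rewrite mulr_gt0 ?expR_gt0.
have -> : E * G = E * Q * (2 + q) by rewrite /G; ring.
have -> : 2 * (E * A * Q) + E * B * (Q * q) = E * Q * (2 * A + q * B) by ring.
by rewrite ler_pM2l.
Qed.

Lemma b_const2 : b_const (2 : R) = 2^-1.
Proof.
rewrite /b_const.
have -> : (2 - 2) / (2 - 1) = 0 :> R by rewrite subrr mul0r.
have -> : 1 - 2 / 2 = 0 :> R by rewrite divff ?subrr.
have -> : 2 - 2 / 2 = 1 :> R by rewrite divff //; lra.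
rewrite powRr0 powR0 ?oner_neq0 // mulr1 addr0.
have -> : - (2 / 2) = -1 :> R by rewrite divff.
by rewrite powR_inv1.
Qed.

Lemma b_ge0 p : 0 <= b_const p.
Proof. exact: powR_ge0. Qed.

Lemma keyK p t : 1 < p -> p <= 2 -> 0 <= t ->
  t ^+ 2 <= 2 * (b_const p * t `^ p) + (b_const p * t `^ p) ^+ 2.
Proof.
move=> p1 p2; rewrite le_eqVlt => /predU1P[<-|t0].
  rewrite expr0n /=; apply: addr_ge0; last exact: sqr_ge0.
  by apply: mulr_ge0 => //; apply: mulr_ge0; [exact: b_ge0|exact: powR_ge0].
move: p2; rewrite le_eqVlt => /predU1P[->|p2]; last exact: keyK_lt2.
rewrite b_const2 (powR_mulrn 2 (ltW t0)).
have := sqr_ge0 (2^-1 * t ^+ 2); lra.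
Qed.

Lemma psi_up p x : 1 < p -> p <= 2 ->
  expR (psi p x) <= 1 + x + b_const p * `|x| `^ p.
Proof.
move=> p1 p2; rewrite /psi.
have hb := b_ge0 p; have hP : 0 <= b_const p * `|x| `^ p.
  by apply: mulr_ge0 => //; exact: powR_ge0.
case: ifPn => x0.
  rewrite lnK; first by lra.
  by rewrite posrE; lra.
have xn : x < 0 by rewrite ltNge.
have K := keyK p `|x| p1 p2 (normr_ge0 x).
rewrite ltr0_norm // in K hP *.
set P := b_const p * (- x) `^ p in K hP *.
have u0 : 0 < P - x + 1 by lra.
rewrite expRN lnK ?posrE // -div1r ler_pdivrMr //.
rewrite sqrrN in K.
nra.
Qed.

Lemma psi_dn p x : 1 < p -> p <= 2 ->
  expR (- psi p x) <= 1 - x + b_const p * `|x| `^ p.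
Proof.
move=> p1 p2; rewrite /psi.
have hb := b_ge0 p; have hP : 0 <= b_const p * `|x| `^ p.
  by apply: mulr_ge0 => //; exact: powR_ge0.
case: ifPn => x0; last first.
  rewrite opprK lnK; first by lra.
  rewrite posrE; suff : x < 0 by lra. by rewrite ltNge.
have K := keyK p `|x| p1 p2 (normr_ge0 x).
rewrite ger0_norm // in K hP *.
set P := b_const p * x `^ p in K hP *.
have u0 : 0 < P + x + 1 by lra.
rewrite expRN lnK ?posrE // -div1r ler_pdivrMr //.
nra.
Qed.
End RealPart.

Section ProbPart.
Context {R : realType} {d : measure_display} {T : measurableType d}
  (P : probability T R).

Lemma int_sum_indic (I : Type) (s : seq I) (v : I -> R) (B : I -> set T) :
  (forall i, 0 <= v i) -> (forall i, measurable (B i)) ->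
  (\int[P]_w (\sum_(i <- s) v i * \1_(B i) w)%:E =
    (\sum_(i <- s) v i * fine (P (B i)))%:E)%E.
Proof.
move=> v0 mB.
under eq_integral do rewrite -sumEFin.
rewrite ge0_integral_sum //; last first.
- by move=> i x _; rewrite lee_fin mulr_ge0.
- move=> i; apply/measurable_EFinP; apply: measurable_funM.
    exact: measurable_cst.
  exact: measurable_indic.
rewrite -sumEFin; apply: eq_bigr => i _.
under eq_integral do rewrite EFinM.
rewrite ge0_integralZl_EFin //.
- by rewrite integral_indic // setIT EFinM fineK //; exact: fin_num_measure.
- by apply/measurable_EFinP; exact: measurable_indic.
Qed.

Lemma prod_indic (n : nat) (X : 'I_n -> T -> R) (B : 'I_n -> set R) w :
  \prod_(k < n) \1_(B k) (X k w) = \1_([set w | forall k, B k (X k w)]) w :> R.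
Proof.
have [H|H] := pselect (forall k, B k (X k w)).
  rewrite indicE mem_set //; apply: big1 => k _.
  by rewrite indicE mem_set.
rewrite indicE memNset //.
have [k Hk] : exists k, ~ B k (X k w).
  by apply: contra_notP H => H k; apply: contra_notP H => Hk; exists k.
by rewrite (bigD1 k) //= indicE memNset // mul0r.
Qed.


Lemma indep_prod (Y : nat -> {RV P >-> R}) (HI : mutually_independent Y) n
  (A : 'I_n -> set R) : (forall k, measurable (A k)) ->
  fine (P [set w | forall k : 'I_n, A k (Y k w)]) =
  \prod_(k < n) fine (P (Y k @^-1` A k)).
Proof.
move=> mA.
pose B j : set R := if (insub j : option 'I_n) is Some k then A k else setT.
have mB j : measurable (B j) by rewrite /B; case: insub.
have := HI (iota 0 n) B (iota_uniq 0 n) mB.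
have -> : \bigcap_(j in [set j | j \in iota 0 n]) (Y j @^-1` B j) =
          [set w | forall k : 'I_n, A k (Y k w)].
  apply/seteqP; split => w /=.
  - move=> H k; have := H k; rewrite /= mem_iota /= add0n ltn_ord /B valK.
    by apply.
  - move=> H j; rewrite /= mem_iota add0n => /andP[_ jn].
    rewrite /B (insubT (fun j => j < n)%N jn).
    exact: H.
have -> : iota 0 n = index_iota 0 n by rewrite /index_iota subn0.
rewrite big_mkord => ->.
rewrite (eq_bigr (fun k : 'I_n => (fine (P (Y k @^-1` A k)))%:E)).
  by rewrite prodEFin.
move=> k _; rewrite /B valK fineK //.
apply: fin_num_measure; exact: measurable_funPTI.
Qed.


Section simple.
Import HBNNSimple.
Variable (h : {nnsfun R >-> R}).
Let s := finmap.enum_fset (fset_set (range (h : R -> R))).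
Let m := size s.
Let v (i : 'I_m) := s`_i.
Let A (i : 'I_m) := h @^-1` [set v i].

Let hE x : h x = \sum_(i < m) v i * \1_(A i) x.
Proof. exact: fimfunEord. Qed.

Let v0 i : 0 <= v i.
Proof.
have : v i \in range h.
  rewrite -(in_fset_set (fimfunP h)).
  exact: (mem_nth 0 (ltn_ord i)).
by rewrite inE => -[x _ <-]; exact: fun_ge0.
Qed.

Let mA i : measurable (A i).
Proof. exact: measurable_funPTI. Qed.

Lemma int_simple (X : {RV P >-> R}) :
  (\int[P]_w (h (X w))%:E =
   (\sum_(i < m) v i * fine (P (X @^-1` A i)))%:E)%E.
Proof.
under eq_integral do rewrite hE.
rewrite -int_sum_indic //; last by move=> i; exact: measurable_funPTI.
Qed.

Lemma int_prod_simple (Y : nat -> {RV P >-> R}) (HI : mutually_independent Y)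
  n : (\int[P]_w (\prod_(k < n) h (Y k w))%:E =
   (\prod_(k < n) \sum_(i < m) v i * fine (P (Y k @^-1` A i)))%:E)%E.
Proof.
pose E (f : {ffun 'I_n -> 'I_m}) := [set w | forall k : 'I_n, A (f k) (Y k w)].
have E1 w : \prod_(k < n) h (Y k w) =
    \sum_(f : {ffun 'I_n -> 'I_m}) (\prod_(k < n) v (f k)) * \1_(E f) w.
  rewrite (eq_bigr (fun k : 'I_n => \sum_(i < m) v i * \1_(A i) (Y k w)));
    last by move=> k _; rewrite hE.
  rewrite bigA_distr_bigA /=; apply: eq_bigr => f _.
  by rewrite big_split /= (@prod_indic n (fun k : 'I_n => Y k) (fun k => A (f k))).
under eq_integral do rewrite E1.
rewrite int_sum_indic //; last first.
- move=> f; apply/(measurable_indicP R).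
  have -> : (\1_(E f) : T -> R) = fun w => \prod_(k < n) \1_(A (f k)) (Y k w).
    by apply/funext => w; rewrite (@prod_indic n (fun k : 'I_n => Y k) (fun k => A (f k))).
  apply: measurable_prod => k _.
  apply: measurableT_comp; first exact: measurable_indic.
  exact: measurable_funPT.
- by move=> f; apply: prodr_ge0 => k _.
congr EFin.
rewrite bigA_distr_bigA /=; apply: eq_bigr => f _.
by rewrite (@indep_prod Y HI n (fun k => A (f k))) // big_split.
Qed.

End simple.

Lemma cvg_bigprod (I : Type) (r : seq I) (u : I -> nat -> R) (l : I -> R) :
  (forall i, u i j @[j --> \oo] --> l i) ->
  (\prod_(i <- r) u i j) @[j --> \oo] --> \prod_(i <- r) l i.
Proof.
move=> cu; elim: r => [|a r IH].
  rewrite big_nil; under eq_fun do rewrite big_nil; exact: cvg_cst.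
rewrite big_cons; under eq_fun do rewrite big_cons.
exact: cvgM.
Qed.

Import HBNNSimple.
Lemma int_prod_le (Y : nat -> {RV P >-> R}) (HI : mutually_independent Y) n
  (f : R -> R) (mf : measurable_fun setT f) (f0 : forall x, 0 <= f x) (M : R)
  (HM : forall k, (\int[P]_w (f (Y k w))%:E <= M%:E)%E) :
  (\int[P]_w (\prod_(k < n) f (Y k w))%:E <= (M ^+ n)%:E)%E.
Proof.
have mF : measurable_fun setT (EFin \o f) by apply/measurable_EFinP.
have F0 : forall x, setT x -> (0 <= (EFin \o f) x)%E by move=> x _; rewrite lee_fin.
pose h := nnsfun_approx measurableT mF.
have hle j x : h j x <= f x.
  have := @le_approx _ _ _ setT (EFin \o f) j x F0 I.
  by rewrite -(nnsfun_approxE measurableT mF) lee_fin.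
have hnd x a b : (a <= b)%N -> h a x <= h b x.
  by move=> ab; have /lefP := nd_nnsfun_approx measurableT mF ab; apply.
have hcvg x : h j x @[j --> \oo] --> f x.
  have := cvg_nnsfun_approx measurableT mF F0 I (x := x).
  by move/fine_cvgP => [_].
pose g j w := (\prod_(k < n) h j (Y k w))%:E.
have mg j : measurable_fun setT (g j).
  apply/measurable_EFinP; apply: measurable_prod => k _.
  apply: measurableT_comp; first exact: measurable_funPT.
  exact: measurable_funPT.
have g0 j w : setT w -> (0 <= g j w)%E.
  by move=> _; rewrite lee_fin; apply: prodr_ge0 => k _; exact: fun_ge0.
have gnd w : setT w -> {homo g^~ w : a b / (a <= b)%N >-> (a <= b)%E}.
  move=> _ a b ab; rewrite lee_fin; apply: ler_prod => k _.
  by rewrite fun_ge0 hnd.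
have glim w : limn (g ^~ w) = (\prod_(k < n) f (Y k w))%:E.
  apply: cvg_lim => //; apply/fine_cvgP; split; first exact: nearW.
  exact: cvg_bigprod.
have := cvg_monotone_convergence (mu := P) measurableT mg g0 gnd.
have -> : (\int[P]_(x in setT) limn (g^~ x) =
    \int[P]_w (\prod_(k < n) f (Y k w))%:E)%E.
  by apply: eq_integral => w _; rewrite glim.
move=> Hc; rewrite -(cvg_lim _ Hc) //.
apply: lime_le; first by apply/cvg_ex; eexists; exact: Hc.
apply: nearW => j.
have -> : M ^+ n = \prod_(k < n) M by rewrite prodr_const card_ord.
rewrite /g int_prod_simple // lee_fin.
apply: ler_prod => k _; apply/andP; split.
  rewrite -lee_fin -int_simple; apply: integral_ge0 => w _.
  by rewrite lee_fin fun_ge0.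
rewrite -lee_fin -int_simple; apply: le_trans (HM k).
apply: ge0_le_integral => //.
- by move=> w _; rewrite lee_fin fun_ge0.
- apply/measurable_EFinP; apply: measurableT_comp; exact: measurable_funPT.
- apply/measurable_EFinP; apply: measurableT_comp => //; exact: measurable_funPT.
- by move=> w _; rewrite lee_fin.
Qed.

End ProbPart.

Lemma measurable_psi (R : realType) (p : R) : measurable_fun setT (psi p).
Proof.
have mP : measurable_fun setT (fun x : R => b_const p * `|x| `^ p).
  apply: measurable_funM; first exact: measurable_cst.
  apply: (measurableT_comp (f := fun y : R => y `^ p) (g := fun y : R => `|y|)); [exact: measurable_powR | exact: normr_measurable].
apply: measurable_fun_ifT.
- apply: (measurable_fun_ler (f := cst 0)); first exact: measurable_cst.
  exact: measurable_id.
- apply: measurableT_comp; first exact: measurable_ln.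
  apply: measurable_funD; last exact: measurable_cst.
  by apply: measurable_funD => //; exact: measurable_id.
- apply: measurable_funN.
  apply: (measurableT_comp (f := @ln R)); first exact: measurable_ln.
  apply: measurable_funD; last exact: measurable_cst.
  apply: measurable_funB => //; exact: measurable_id.
Qed.

Lemma powR_invr (R : realType) (x r : R) : 0 < x -> x^-1 `^ r = (x `^ r)^-1.
Proof.
move=> x0; rewrite !(powR_pos _ r) ?invr_gt0 // lnV ?posrE //.
by rewrite mulrN expRN.
Qed.

Section Main.
Context {R : realType} {d : measure_display} {T : measurableType d}
  (P : probability T R).
Variable Y : nat -> {RV P >-> R}.
Hypothesis HI : mutually_independent Y.
Hypothesis HD : identically_distributed Y.

Lemma int_id (F : R -> \bar R) (mF : measurable_fun setT F)
  (F0 : forall x, (0 <= F x)%E) k :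
  (\int[P]_w F (Y k w) = \int[P]_w F (Y 0%N w))%E.
Proof.
have h1 := ge0_integral_distribution (Y k) mF F0.
have h2 := ge0_integral_distribution (Y 0%N) mF F0.
rewrite /comp in h1 h2; rewrite -h1 -h2.
by apply: eq_measure_integral => A mA _; exact: HD.
Qed.

Variables (p c : R) (n : nat).
Hypotheses (p1 : 1 < p) (p2 : p <= 2) (c0 : 0 < c) (n0 : (0 < n)%N).
Hypothesis Hnu : (\int[P]_w ((`|Y 0%N w| `^ p)%:E) < +oo)%E.

Let nu := fine (\int[P]_w ((`|Y 0%N w| `^ p)%:E)).
Let y := fine ('E_P[Y 0%N]).
Let C := c * n%:R `^ p^-1.

Let C0 : 0 < C.
Proof. by rewrite /C mulr_gt0 // powR_gt0 // ltr0n. Qed.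

Let mY k : measurable_fun setT (Y k).
Proof. exact: measurable_funPT. Qed.

Let mZ : measurable_fun setT (fun w => `|Y 0%N w| `^ p).
Proof.
apply: (measurableT_comp (f := fun y : R => `|y| `^ p)) => //.
exact: (measurableT_comp (f := fun y : R => y `^ p) (g := fun y : R => `|y|)).
Qed.

Let intZ : P.-integrable setT (EFin \o (fun w => `|Y 0%N w| `^ p)).
Proof.
apply/integrableP; split; first exact/measurable_EFinP.
rewrite (eq_integral (fun w => (`|Y 0%N w| `^ p)%:E)) //.
by move=> w _; rewrite /comp /= ger0_norm // powR_ge0.
Qed.

Let intY : P.-integrable setT (EFin \o Y 0%N).
Proof.
apply: (@le_integrable _ _ _ P setT measurableT _ (EFin \o (fun w => 1 + `|Y 0%N w| `^ p))) => //.
- exact/measurable_EFinP.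
- move=> w _; rewrite /comp /= lee_fin (ger0_norm (x := 1 + _)); last first.
    by rewrite addr_ge0 // powR_ge0.
  have [h|h] := lerP `|Y 0%N w| 1.
    by have := powR_ge0 `|Y 0%N w| p; lra.
  have : `|Y 0%N w| `^ 1 <= `|Y 0%N w| `^ p by apply: ler_powR; apply: ltW.
  by rewrite powRr1 //; lra.
- have -> : EFin \o (fun w => 1 + `|Y 0%N w| `^ p) =
            (EFin \o cst 1) \+ (EFin \o (fun w => `|Y 0%N w| `^ p)) by [].
  apply: integrableD => //; exact: finite_measure_integrable_cst.
Qed.

Let EY : ('E_P[Y 0%N] = y%:E)%E.
Proof. by rewrite /y fineK // unlock; exact: integrable_fin_num. Qed.

Let Enu : (\int[P]_w ((`|Y 0%N w| `^ p)%:E) = nu%:E)%E.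
Proof.
rewrite /nu fineK // ge0_fin_numE //.
by apply: integral_ge0 => w _; rewrite lee_fin powR_ge0.
Qed.

Let M s := 1 + s * y / C + b_const p * nu / C `^ p.

Let f s x := expR (s * psi p (x / C)).

Let mf s : measurable_fun setT (f s).
Proof.
apply: (measurableT_comp (f := expR)); first exact: measurable_expR.
apply: measurable_funM; first exact: measurable_cst.
apply: (measurableT_comp (f := psi p)); first exact: measurable_psi.
by apply: measurable_funM => //; exact: measurable_cst.
Qed.

Lemma mgf_bound (s : R)
  (Hs : forall x, expR (s * psi p x) <= 1 + s * x + b_const p * `|x| `^ p) :
  (\int[P]_w (f s (Y 0%N w))%:E <= (M s)%:E)%E.
Proof.
pose g w := 1 + (s / C) * Y 0%N w + (b_const p / C `^ p) * `|Y 0%N w| `^ p.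
apply: (@le_trans _ _ (\int[P]_w (g w)%:E)%E).
  apply: ge0_le_integral => //.
  - by move=> w _; rewrite lee_fin expR_ge0.
  - by apply/measurable_EFinP; apply: measurableT_comp => //; exact: mf.
  - apply/measurable_EFinP; apply: measurable_funD.
      apply: measurable_funD; first exact: measurable_cst.
      by apply: measurable_funM => //; exact: measurable_cst.
    by apply: measurable_funM => //; exact: measurable_cst.
  move=> w _; rewrite lee_fin; apply: le_trans (Hs _) _.
  suff -> : 1 + s * (Y 0%N w / C) + b_const p * `|Y 0%N w / C| `^ p = g w by [].
  rewrite /g normrM normfV (gtr0_norm C0) powRM ?invr_ge0 ?(ltW C0) //.
  by rewrite powR_invr //; ring.
have EY' : (\int[P]_w (Y 0%N w)%:E = y%:E)%E by rewrite -EY unlock.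
rewrite (eq_integral (fun w => 1%:E + (s / C)%:E * (Y 0%N w)%:E +
   (b_const p / C `^ p)%:E * (`|Y 0%N w| `^ p)%:E))%E; last first.
  by move=> w _; rewrite -!EFinM -!EFinD.
have i1 : P.-integrable setT (fun w : T => 1%:E) :=
  finite_measure_integrable_cst P 1 measurableT.
have i2 : P.-integrable setT (fun w => (s / C)%:E * (Y 0%N w)%:E)%E.
  exact: integrableZl.
have i3 : P.-integrable setT
    (fun w => (b_const p / C `^ p)%:E * (`|Y 0%N w| `^ p)%:E)%E.
  exact: integrableZl.
rewrite integralD //; last exact: integrableD.
rewrite integralD // integralZl // integralZl // EY' Enu.
have -> : (\int[P]_w 1%:E = 1)%E.
  by rewrite (integral_cst P measurableT 1%:E) mul1e; exact: probability_setT.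
rewrite -!EFinM -!EFinD /M lee_fin; rewrite le_eqVlt; apply/orP; left; apply/eqP; ring.
Qed.

Lemma chern (s a : R)
  (Hs : forall x, expR (s * psi p x) <= 1 + s * x + b_const p * `|x| `^ p)
  (A : set T) (mA : measurable A)
  (HA : forall w, A w -> a < s * \sum_(k < n) psi p (Y k w / C)) :
  (P A <= (expR (- a) * expR (n%:R * (M s - 1)))%:E)%E.
Proof.
have mFs : measurable_fun setT (EFin \o f s) by apply/measurable_EFinP; exact: mf.
have F0s : forall x, (0 <= (EFin \o f s) x)%E by move=> x; rewrite lee_fin expR_ge0.
have f0 : forall x, 0 <= f s x by move=> x; exact: expR_ge0.
have HM k : (\int[P]_w (f s (Y k w))%:E <= (M s)%:E)%E.
  by have := @int_id (EFin \o f s) mFs F0s k; rewrite /comp => ->; exact: mgf_bound.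
have M0 : 0 <= M s.
  rewrite -lee_fin; apply: le_trans (HM 0%N).
  by apply: integral_ge0 => w _; rewrite lee_fin.
have Hprod := @int_prod_le _ _ _ P Y HI n (f s) (mf s) f0 (M s) HM.
have Mn : M s ^+ n <= expR (n%:R * (M s - 1)).
  rewrite expRM_natl; apply: lerXn2r; rewrite ?nnegrE ?expR_ge0 //.
  by have := expR_ge1Dx (M s - 1); lra.
have mprod : measurable_fun setT (fun w => \prod_(k < n) f s (Y k w)).
  apply: measurable_prod => k _.
  exact: (measurableT_comp (mf s) (mY k)).
have -> : P A = (\int[P]_w (\1_A w)%:E)%E by rewrite integral_indic // setIT.
apply: (@le_trans _ _
  (\int[P]_w ((expR (- a)) * \prod_(k < n) f s (Y k w))%:E)%E).
  apply: ge0_le_integral => //.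
  - apply/measurable_EFinP; exact: (@measurable_indic _ T R setT A mA).
  - apply/measurable_EFinP; apply: measurable_funM; [exact: measurable_cst | exact: mprod].
  move=> w _; rewrite lee_fin.
  have -> : \prod_(k < n) f s (Y k w) =
      expR (s * \sum_(k < n) psi p (Y k w / C)).
    by rewrite mulr_sumr expR_sum.
  rewrite -expRD indicE.
  case: (boolP (w \in A)) => wA /=.
    have := HA w (set_mem wA); have := expR_ge1Dx (- a + s * \sum_(k < n) psi p (Y k w / C)).
    lra.
  exact: expR_ge0.
under eq_integral do rewrite EFinM.
rewrite ge0_integralZl_EFin //; last 2 first.
- by move=> w _; rewrite lee_fin prodr_ge0.
- exact/measurable_EFinP.
rewrite EFinM; apply: lee_wpmul2l; first by rewrite lee_fin expR_ge0.
by apply: le_trans Hprod _; rewrite lee_fin.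
Qed.

Let N := n%:R `^ (1 - p^-1).

Let n0' : 0 < n%:R :> R.
Proof. by rewrite ltr0n. Qed.

Let N0 : 0 < N.
Proof. by rewrite /N powR_gt0. Qed.

Let hNC : n%:R / C = N / c.
Proof.
have hn : n%:R = n%:R `^ p^-1 * N :> R.
  rewrite /N -powRD; last by rewrite implybE orbC pnatr_eq0 -lt0n n0.
  by rewrite addrC subrK powRr1 // ltW.
rewrite /C {1}hn; field.
by apply/andP; split; apply/negP => /eqP H;
  [move: c0; rewrite H ltxx | have := powR_gt0 p^-1 n0'; rewrite H ltxx].
Qed.

Let hCp : C `^ p = c `^ p * n%:R.
Proof.
rewrite /C powRM ?(ltW c0) ?powR_ge0 // -powRrM mulVf.
  by rewrite powRr1 // ltW.
by apply/negP => /eqP H; move: p1; rewrite H; lra.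
Qed.

Let mYh : measurable_fun setT (Yhat Y p c n).
Proof.
rewrite /Yhat; apply: measurable_funM; first exact: measurable_cst.
apply: measurable_sum => k.
apply: (measurableT_comp (f := psi p)); first exact: measurable_psi.
by apply: measurable_funM => //; exact: measurable_cst.
Qed.

Let YhE w : Yhat Y p c n w = c / N * \sum_(k < n) psi p (Y k w / C).
Proof. by []. Qed.

Let expo (s a : R) : 
  - a + n%:R * (M s - 1) = - a + s * y * (N / c) + b_const p * nu / c `^ p.
Proof.
have e1 : n%:R * (s * y / C) = s * y * (N / c) by rewrite -hNC; ring.
have e2 : n%:R * (b_const p * nu / C `^ p) = b_const p * nu / c `^ p.
  rewrite hCp; field; apply/andP; split; apply/negP => /eqP H.
    by have := powR_gt0 p c0; rewrite H ltxx.
  by move: n0'; rewrite H ltxx.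
rewrite /M.
have -> : 1 + s * y / C + b_const p * nu / C `^ p - 1 =
  s * y / C + b_const p * nu / C `^ p by ring.
by rewrite mulrDr e1 e2; ring.
Qed.

Let epn : (p - 1) / p = 1 - p^-1.
Proof. by field; apply/negP => /eqP H; move: p1; rewrite H; lra. Qed.

Lemma final_up (eps : R) : 0 < eps ->
  (P [set w | (y + eps < Yhat Y p c n w)%R] <=
   (expR (- (n%:R `^ ((p - 1) / p) * eps / c) + b_const p * nu / c `^ p))%:E)%E.
Proof.
move=> e0.
have mA : measurable [set w | y + eps < Yhat Y p c n w].
  have -> : [set w | y + eps < Yhat Y p c n w] =
      Yhat Y p c n @^-1` `]y + eps, +oo[.
    by apply/seteqP; split => w /=; rewrite in_itv /= andbT.
  rewrite -(setTI (_ @^-1` _)); apply: mYh => //; exact: measurable_itv.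
have Hs : forall x, expR (1 * psi p x) <= 1 + 1 * x + b_const p * `|x| `^ p.
  by move=> x; rewrite !mul1r; exact: psi_up.
have := @chern 1 (N * (y + eps) / c) Hs _ mA.
rewrite -expRD expo epn -/N.
have -> : - (N * (y + eps) / c) + 1 * y * (N / c) + b_const p * nu / c `^ p =
   - (N * eps / c) + b_const p * nu / c `^ p by ring.
apply => w /=; rewrite YhE mul1r => H.
have Nc : 0 < N / c by rewrite divr_gt0.
have := ltr_pM2l Nc; move=> /(_ (y + eps) (c / N * \sum_(k < n) psi p (Y k w / C))).
rewrite H mulrA (_ : N / c * (c / N) = 1); last first.
  by field; apply/andP; split; apply/negP => /eqP H0;
    [move: N0 | move: c0]; rewrite H0 ltxx.
rewrite mul1r => /esym H1.
by move: H1; rewrite (_ : N / c * (y + eps) = N * (y + eps) / c) //; ring.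
Qed.

Lemma final_dn (eps : R) : 0 < eps ->
  (P [set w | (Yhat Y p c n w + eps < y)%R] <=
   (expR (- (n%:R `^ ((p - 1) / p) * eps / c) + b_const p * nu / c `^ p))%:E)%E.
Proof.
move=> e0.
have mA : measurable [set w | Yhat Y p c n w + eps < y].
  have -> : [set w | Yhat Y p c n w + eps < y] =
      Yhat Y p c n @^-1` `]-oo, y - eps[.
    by apply/seteqP; split => w /=; rewrite in_itv /=; move=> H; lra.
  rewrite -(setTI (_ @^-1` _)); apply: mYh => //; exact: measurable_itv.
have Hs : forall x, expR (-1 * psi p x) <= 1 + -1 * x + b_const p * `|x| `^ p.
  by move=> x; rewrite !mulN1r; exact: psi_dn.
have := @chern (-1) (N * (eps - y) / c) Hs _ mA.
rewrite -expRD expo epn -/N.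
have -> : - (N * (eps - y) / c) + -1 * y * (N / c) + b_const p * nu / c `^ p =
   - (N * eps / c) + b_const p * nu / c `^ p by ring.
apply => w /=; rewrite YhE => H.
have Nc : 0 < N / c by rewrite divr_gt0.
set S := \sum_(k < n) psi p (Y k w / C) in H *.
have H2 : eps - y < - (c / N * S) by lra.
have := ltr_pM2l Nc; move=> /(_ (eps - y) (- (c / N * S))).
rewrite H2 mulrN mulrA (_ : N / c * (c / N) = 1); last first.
  by field; apply/andP; split; apply/negP => /eqP H0;
    [move: N0 | move: c0]; rewrite H0 ltxx.
rewrite mul1r => /esym H1.
have -> : -1 * S = - S by ring.
by move: H1; rewrite (_ : N / c * (eps - y) = N * (eps - y) / c) //; ring.
Qed.

End Main.


Theorem theorem2 (R : realType) (d : measure_display) (T : measurableType d)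
  (P : probability T R) (Y : nat -> {RV P >-> R}) (p c : R) (n : nat)
  (eps : R) :
  1 < p -> p <= 2 ->
  mutually_independent Y -> identically_distributed Y ->
  (\int[P]_w ((`|Y 0%N w| `^ p)%:E) < +oo)%E ->
  0 < c -> (1 <= n)%N -> 0 < eps ->
  let nu := fine (\int[P]_w ((`|Y 0%N w| `^ p)%:E)) in
  let y := fine ('E_P[Y 0%N]) in
  let bound := expR (- (n%:R `^ ((p - 1) / p) * eps / c)
                     + b_const p * nu / c `^ p) in
  (P [set w | (y + eps < Yhat Y p c n w)%R] <= bound%:E)%E /\
  (P [set w | (Yhat Y p c n w + eps < y)%R] <= bound%:E)%E.
Proof.
move=> p1 p2 HI HD Hnu c0 n1 eps0 nu y bound.
split.
- exact: (final_up P Y HI HD p c n p1 p2 c0 n1 Hnu eps eps0).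
- exact: (final_dn P Y HI HD p c n p1 p2 c0 n1 Hnu eps eps0).
Qed.
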